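(* Suppose the ST problem for $(D_{SC},F,B)$ has a positive answer. Then there is a solution $\{\pi(v): v \text{ a source of } D_{SC}\}$ such that (a) $\pi(u_{i,j})=P_{i,j}$ for every $i\in\mathcal U$ and $j\in I_i$, and (b) for every $t\in\{1,\dots,k\}$ there is $l\in\{1,\dots,m\}$ with $\pi(z_t)=(z_t,z)\circ P^h_l$ (concatenation of the arc $(z_t,z)$ with the horizontal path $P^h_l$).
   Context: Snow Team problem (ST): given a digraph $D=(\mathcal V,\mathcal A)$ whose underlying graph is connected, and $F:\mathcal V\to\{0,1\}$, $B:\mathcal V\to\mathbb N$, with $\mathbf k_B=\sum_vB(v)$: do there exist $\mathbf k_B$ directed walks, exactly $B(v)$ of which start at each $v$, such that, letting $H$ be the subgraph consisting of the vertices and arcs of these walks, all vertices of $F^{-1}(1)$ lie in one connected component of the underlying undirected graph of $H$? Such walks form a solution. Construction: $\mathcal U=\{1,\dots,n\}$, $\mathcal S=\{S_1,\dots,S_m\}$ with $S_t\subseteq\mathcal U$, $\bigcup_tS_t=\mathcal U$, and $1\le k\le m$. Write $S_t=\{x_1<\dots<x_{\ell(t)}\}$ and $I_i=\{j: i\in S_j\}$. The digraph $D_{SC}$ has vertices $u_i$ ($i\in\mathcal U$); $u_{i,j},u'_{i,j},v_{i,j},v'_{i,j}$ ($i\in\mathcal U$, $j\in I_i$); and $z,z_1,\dots,z_k$. Its arcs are those of the vertical paths $P_{i,j}=(u_{i,j},u_i,u'_{i,j},v_{i,j},v'_{i,j})$ ($i\in\mathcal U,j\in I_i$), of the horizontal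 paths $P^h_t=(z,v_{x_1,t},v_{x_2,t},\dots,v_{x_{\ell(t)},t})$ ($t\in\{1,\dots,m\}$, with $x_1<\dots<x_{\ell(t)}$ the elements of $S_t$), and the arcs $(z_l,z)$ for $l=1,\dots,k$. Set $F(v)=1$ for all vertices $v$, and $B(v)=1$ if $v$ is a source of $D_{SC}$ (i.e. $v\in\{u_{i,j}\}\cup\{z_1,\dots,z_k\}$) and $B(v)=0$ otherwise. Since $D_{SC}$ is acyclic, every solution consists of one directed path $\pi(v)$ starting at each source $v$. *)

(* Defs.v *)
From HB Require Import structures.
From mathcomp Require Import all_boot.
Set Implicit Arguments. Unset Strict Implicit. Unset Printing Implicit Defensive.

(* Generic Snow Team problem on a digraph given by a vertex predicate  *)
(* [vert] on a type V and an arc relation [arc] (arcs only join        *)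
(* vertices).                                                          *)
Section ST.
Variable V : eqType.

Definition is_walk (vert : pred V) (arc : rel V) (w : seq V) : bool :=
  if w is x :: w' then all vert w && path arc x w' else false.

Definition walk_arcs (w : seq V) : seq (V * V) := zip w (behead w).

Definition H_vert (W : seq (seq V)) (x : V) : bool := has (fun w => x \in w) W.
Definition H_arc (W : seq (seq V)) (x y : V) : bool :=
  has (fun w => (x, y) \in walk_arcs w) W.
Definition H_adj (W : seq (seq V)) (x y : V) : bool := H_arc W x y || H_arc W y x.
Definition H_connected (W : seq (seq V)) (x y : V) : Prop :=
  exists p : seq V, path (H_adj W) x p /\ last x p = y.

Definition ST_solution (vert : pred V) (arc : rel V) (F : V -> bool) (B : V -> nat)
    (W : seq (seq V)) : Prop :=
  [/\ all (is_walk vert arc) W,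
      (forall v, vert v -> count (fun w => ohead w == Some v) W = B v),
      (forall x, vert x -> F x -> H_vert W x) &
      (forall x y, vert x -> vert y -> F x -> F y -> H_connected W x y)].

Definition ST_positive (vert : pred V) (arc : rel V) (F : V -> bool) (B : V -> nat) : Prop :=
  exists W, ST_solution vert arc F B W.
End ST.

(* The digraph D_SC.  Indices are 0-based: U = 'I_n, t ranges over     *)
(* 'I_m, l over 'I_k.                                                  *)
Inductive vtx (n m k : nat) : Type :=
| VU of 'I_n
| VUij of 'I_n & 'I_m
| VU'ij of 'I_n & 'I_m
| VVij of 'I_n & 'I_m
| VV'ij of 'I_n & 'I_m
| VZ
| VZl of 'I_k.
Arguments VU {n m k}. Arguments VUij {n m k}. Arguments VU'ij {n m k}.
Arguments VVij {n m k}. Arguments VV'ij {n m k}. Arguments VZ {n m k}.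
Arguments VZl {n m k}.

Section Vtx.
Variables n m k : nat.
Local Notation code_t := (('I_n + ('I_4 * ('I_n * 'I_m))) + option 'I_k)%type.

Definition vtx_code (x : vtx n m k) : code_t :=
  match x with
  | VU i => inl (inl i)
  | VUij i j => inl (inr (@Ordinal 4 0 isT, (i, j)))
  | VU'ij i j => inl (inr (@Ordinal 4 1 isT, (i, j)))
  | VVij i j => inl (inr (@Ordinal 4 2 isT, (i, j)))
  | VV'ij i j => inl (inr (@Ordinal 4 3 isT, (i, j)))
  | VZ => inr None
  | VZl l => inr (Some l)
  end.

Definition vtx_decode (c : code_t) : vtx n m k :=
  match c with
  | inl (inl i) => VU i
  | inl (inr (a, (i, j))) =>
      match val a with 0 => VUij i j | 1 => VU'ij i j | 2 => VVij i j | _ => VV'ij i j end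
  | inr None => VZ
  | inr (Some l) => VZl l
  end.

Lemma vtx_codeK : cancel vtx_code vtx_decode.
Proof. by case. Qed.

HB.instance Definition _ := Finite.copy (vtx n m k) (can_type vtx_codeK).
End Vtx.

Section DSC.
Variables (n m k : nat) (S : 'I_m -> {set 'I_n}).
Local Notation V := (vtx n m k).

Definition Pv (i : 'I_n) (j : 'I_m) : seq V :=
  [:: VUij i j; VU i; VU'ij i j; VVij i j; VV'ij i j].

Definition Ph (t : 'I_m) : seq V :=
  VZ :: [seq VVij x t | x <- sort (fun a b : 'I_n => (a <= b)%N) (enum (S t))].

Definition DSC_vert (x : V) : bool :=
  match x with
  | VU _ => true
  | VUij i j | VU'ij i j | VVij i j | VV'ij i j => i \in S j
  | VZ => true
  | VZl _ => true
  end.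

Definition DSC_arc (x y : V) : bool :=
  [|| [exists i : 'I_n, exists j : 'I_m, (i \in S j) && ((x, y) \in walk_arcs (Pv i j))],
      [exists t : 'I_m, (x, y) \in walk_arcs (Ph t)]
    | [exists l : 'I_k, (x == VZl l) && (y == VZ)]].

Definition DSC_F (x : V) : bool := true.

(* B v = 1 iff v is a source, i.e. v = u_{i,j} or v = z_l *)
Definition DSC_B (x : V) : nat :=
  match x with
  | VUij _ _ => 1
  | VZl _ => 1
  | _ => 0
  end.
End DSC.
Arguments Pv {n m k} i j.
Arguments Ph {n m k} S t.
Arguments DSC_vert {n m k} S x.
Arguments DSC_arc {n m k} S x y.
Arguments DSC_F {n m k} x.
Arguments DSC_B {n m k} x.

(* Main.v *)
Require Import Defs.
From HB Require Import structures.
From mathcomp Require Import all_boot zify.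
Set Implicit Arguments. Unset Strict Implicit. Unset Printing Implicit Defensive.

Lemma ar1 e y : 2 * e <= (2 * y).+1 -> e <= y. Proof. lia. Qed.
Lemma ar2 e y : 2 * e <= 2 * y -> e <= y. Proof. lia. Qed.

Lemma mem_zipP (T : eqType) (s t : seq T) x y :
  (x, y) \in zip s t -> x \in s /\ y \in t.
Proof.
elim: s t => [|a s IH] [|b t] //=; rewrite inE => /orP [/eqP [-> ->]|/IH [h1 h2]].
  by rewrite !inE !eqxx.
by rewrite !inE h1 h2 !orbT.
Qed.

Lemma walk_arcs_path (T : eqType) (r : rel T) h p x y :
  path r h p -> (x, y) \in walk_arcs (h :: p) -> r x y.
Proof.
elim: p h => [|a p IH] h //= /andP [rha pa]; rewrite inE => /orP [/eqP [-> ->] //|].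
exact: IH.
Qed.

Lemma walk_arcs_mem (T : eqType) (w : seq T) x y :
  (x, y) \in walk_arcs w -> x \in w /\ y \in w.
Proof.
case: w => [|h p] //= /mem_zipP [h1 h2]; split=> //; by rewrite inE h2 orbT.
Qed.

Lemma count_le1_eq (T : eqType) (p : pred T) s x y :
  count p s <= 1 -> x \in s -> y \in s -> p x -> p y -> x = y.
Proof.
elim: s => [|a s IH] //=; rewrite !inE => hc /predU1P[->|xs] /predU1P[->|ys] px py //.
- have : 0 < count p s by rewrite -has_count; apply/hasP; exists y.
  by move: hc; rewrite px; case: (count p s).
- have : 0 < count p s by rewrite -has_count; apply/hasP; exists x.
  by move: hc; rewrite py; case: (count p s).
- apply: IH => //; exact: leq_trans (leq_addl _ _) hc.
Qed.

Lemma path_closed (T : Type) (r : rel T) (X : pred T) x p :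
  (forall a b, X a -> r a b -> X b) -> X x -> path r x p -> X (last x p).
Proof.
move=> hcl; elim: p x => [|a p IH] x //= hx /andP [hxa hp].
by apply: IH => //; exact: hcl hxa.
Qed.

Lemma path_key_last (T : eqType) (key : T -> nat) x p :
  path (fun u v => key u < key v) x p -> forall z, z \in x :: p -> key z <= key (last x p).
Proof.
elim: p x => [|a p IH] x /=.
  by move=> _ z; rewrite inE => /eqP ->.
move=> /andP [hxa hp] z; rewrite inE => /predU1P [->|hz].
  apply: leq_trans (ltnW hxa) _; apply: IH => //; exact: mem_head.
exact: IH.
Qed.

Section G.
Variables (n m k : nat) (S : 'I_m -> {set 'I_n}).
Local Notation V := (vtx n m k).
Local Notation arc := (DSC_arc S).

Inductive arc_shape : V -> V -> Prop :=
| AS1 (i : 'I_n) (j : 'I_m) : arc_shape (VUij i j) (VU i)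
| AS2 (i : 'I_n) (j : 'I_m) : arc_shape (VU i) (VU'ij i j)
| AS3 (i : 'I_n) (j : 'I_m) : arc_shape (VU'ij i j) (VVij i j)
| AS4 (i : 'I_n) (j : 'I_m) : arc_shape (VVij i j) (VV'ij i j)
| AS5 (b : 'I_n) (j : 'I_m) : arc_shape VZ (VVij b j)
| AS6 (a b : 'I_n) (j : 'I_m) : a < b -> arc_shape (VVij a j) (VVij b j)
| AS7 (l : 'I_k) : arc_shape (VZl l) VZ.

Lemma zip_ltn_shape (t : 'I_m) (s : seq 'I_n) x p q :
  path (fun a b : 'I_n => a < b) x s ->
  (p, q) \in zip [seq VVij a t | a <- x :: s] [seq VVij a t | a <- s] ->
  arc_shape p q.
Proof.
elim: s x => [|y s IH] x //= /andP [hxy hp]; rewrite inE => /orP [/eqP [-> ->]|].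
  exact: AS6.
exact: IH.
Qed.

Lemma Ph_shape t p q : (p, q) \in walk_arcs (Ph S t) -> arc_shape p q.
Proof.
rewrite /Ph /walk_arcs /=.
have : sorted (fun a b : 'I_n => a < b) (sort (fun a b : 'I_n => (a <= b)%N) (enum (S t))).
  rewrite -(@sorted_map _ _ val ltn) ltn_sorted_uniq_leq map_inj_uniq; last exact: val_inj.
  rewrite sort_uniq enum_uniq /= sorted_map.
  by apply: sort_sorted => a b; exact: leq_total.
case: (sort _ _) => [|y s] //= hs; rewrite inE => /orP [/eqP [-> ->]|].
  exact: AS5.
exact: zip_ltn_shape.
Qed.

Lemma arc_inv x y : arc x y -> arc_shape x y.
Proof.
case/or3P.
- case/existsP => i /existsP [j /andP [_]].
  rewrite /walk_arcs /= !inE => /or4P [] /eqP [-> ->]; constructor.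
- case/existsP => t; exact: Ph_shape.
- case/existsP => l /andP [/eqP -> /eqP ->]; constructor.
Qed.


Definition incol (j : 'I_m) (v : V) : bool :=
  match v with VVij _ j' | VV'ij _ j' => j' == j | _ => false end.
Definition key (v : V) : nat :=
  match v with VVij a _ => (2 * a) | VV'ij a _ => (2 * a).+1 | _ => 0 end.

Lemma colpath j c p : incol j c -> path arc c p ->
  all (incol j) p && path (fun u v => key u < key v) c p.
Proof.
elim: p c => [|y p IH] c //= hc /andP [hcy hp].
have hy : incol j y && (key c < key y).
  move: (arc_inv hcy) hc => h; case: h => //=.
  - by move=> i j0 ->; rewrite ltnSn.
  - by move=> a b j0 hab ->; rewrite ltn_mul2l.
by case/andP: hy => hy hk; rewrite hy hk /=; exact: IH.
Qed.

Lemma colpath_last j c p x : incol j c -> path arc c p -> VV'ij x j \in c :: p ->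
  last c p = VV'ij x j.
Proof.
elim: p c => [|y p IH] c /=; first by move=> _ _; rewrite inE => /eqP.
move=> hc /andP [hcy hp]; rewrite inE => /predU1P [hx|hx].
  by move: hcy; rewrite -hx => /arc_inv h; inversion h.
apply: IH => //; move: (arc_inv hcy) hc => h; case: h => //=.
Qed.

Inductive wshape : seq V -> Prop :=
 | WZ0 t : wshape [:: VZl t]
 | WZ1 t : wshape [:: VZl t; VZ]
 | WZ2 t x l r : path arc (VVij x l) r -> wshape [:: VZl t, VZ, VVij x l & r]
 | WU0 i j : wshape [:: VUij i j]
 | WU1 i j : wshape [:: VUij i j; VU i]
 | WU2 i j j' : wshape [:: VUij i j; VU i; VU'ij i j']
 | WU3 i j j' r : path arc (VVij i j') r -> wshape [:: VUij i j, VU i, VU'ij i j', VVij i j' & r].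

Lemma wshapeP h p : 0 < DSC_B h -> path arc h p -> wshape (h :: p).
Proof.
case: h => // [i j|t] _.
- case: p => [|y p] /=; first by move=> _; exact: WU0.
  case/andP => /arc_inv h; inversion h; subst => {h}.
  case: p => [|y p] /=; first by move=> _; exact: WU1.
  case/andP => /arc_inv h; inversion h; subst => {h}.
  case: p => [|y p] /=; first by move=> _; exact: WU2.
  case/andP => /arc_inv h; inversion h; subst => {h}.
  exact: WU3.
- case: p => [|y p] /=; first by move=> _; exact: WZ0.
  case/andP => /arc_inv h; inversion h; subst => {h}.
  case: p => [|y p] /=; first by move=> _; exact: WZ1.
  case/andP => /arc_inv h; inversion h; subst => {h}.
  exact: WZ2.
Qed.
End G.

Lemma notin_col n m k (j : 'I_m) (v : vtx n m k) p : all (incol j) p -> ~~ incol j v -> v \notin p.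
Proof. by move=> /allP h; apply: contra => /h ->. Qed.

Section W.
Variables (n m k : nat) (S : 'I_m -> {set 'I_n}) (W : seq (seq (vtx n m k))).
Hypothesis hW : ST_solution (DSC_vert S) (DSC_arc S) DSC_F DSC_B W.
Variable m0 : 'I_m.
Local Notation V := (vtx n m k).
Local Notation arc := (DSC_arc S).
Local Notation vert := (DSC_vert S).

Lemma memW w : w \in W -> [/\ wshape S w, all vert w & exists h p, w = h :: p /\ path arc h p].
Proof.
case: hW => hwalk hcount _ _ wW.
move: (allP hwalk w wW); case: w wW => [|h p] //= wW /andP [/andP [vh vp] hp].
split; [|by rewrite vh vp|by exists h, p].
apply: wshapeP => //; rewrite -(hcount h vh) -has_count; apply/hasP; exists (h :: p) => //.
Qed.

Lemma uniqW w1 w2 h : w1 \in W -> w2 \in W -> ohead w1 = Some h -> ohead w2 = Some h -> w1 = w2.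
Proof.
move=> w1W w2W h1 h2; case: (memW w1W) => _ hv [h' [p' [ew _]]].
have vh : vert h by move: hv; rewrite ew /= => /andP []; move: h1; rewrite ew => -[->].
case: hW => _ hcount _ _.
apply: (@count_le1_eq _ (fun w => ohead w == Some h) W) => //; last by rewrite h2.
  by rewrite hcount //; case: (h).
by rewrite h1.
Qed.

Definition walkOf (h : V) := nth [::] W (find (fun w => ohead w == Some h) W).

Lemma walkOf_mem w h : w \in W -> ohead w = Some h -> walkOf h = w.
Proof.
move=> wW hw.
have hh : has (fun w => ohead w == Some h) W by apply/hasP; exists w => //; rewrite hw.
apply: (uniqW _ wW) => //.
  by rewrite /walkOf; apply: mem_nth; rewrite -has_find.
  exact/eqP/(nth_find [::] hh).
exact: hw.
Qed.

Lemma walkOf_in h y : y \in walkOf h -> walkOf h \in W.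
Proof.
rewrite /walkOf; case: (ltnP (find (fun w => ohead w == Some h) W) (size W)) => hs.
  by move=> _; exact: mem_nth.
by rewrite nth_default.
Qed.

Lemma walkOf_head w : w \in W -> exists h, walkOf h = w.
Proof.
move=> wW; case: (memW wW) => _ _ [h [p [ew _]]]; exists h.
by apply: walkOf_mem => //; rewrite ew.
Qed.

Lemma cov x : vert x -> exists2 w, w \in W & x \in w.
Proof. by case: hW => _ _ hc _ vx; move: (hc x vx erefl) => /hasP. Qed.

Definition c (t : 'I_k) : 'I_m :=
  match walkOf (VZl t) with _ :: _ :: VVij _ l :: _ => l | _ => m0 end.

Lemma zcol w t x l r : w \in W -> w = [:: VZl t, VZ, VVij x l & r] -> l = c t.
Proof. by move=> wW ew; rewrite /c (walkOf_mem wW); rewrite ew. Qed.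

Lemma ushape w e j : w \in W -> VU'ij e j \in w ->
  exists j0, [/\ e \in S j0, w = walkOf (VUij e j0) & nth VZ w 2 = VU'ij e j].
Proof.
move=> wW hin; case: (memW wW) => hs hv _; move: wW hin hv.
case: w / hs => [t|t|t x l r hp|i j0|i j0|i j0 j'|i j0 j' r hp] wW; rewrite ?inE //=.
- move: (colpath (eqxx l : incol l (VVij x l)) hp) => /andP [hcol _].
  by rewrite (negbTE (@notin_col _ _ _ _ (VU'ij e j) _ hcol isT)).
- move=> /eqP [-> ->] /andP [he _]; exists j0; split=> //.
  by rewrite (walkOf_mem wW).
- move: (colpath (eqxx j' : incol j' (VVij i j')) hp) => /andP [hcol _].
  rewrite (negbTE (@notin_col _ _ _ _ (VU'ij e j) _ hcol isT)) orbF.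
  move=> /eqP [-> ->] /andP [he _]; exists j0; split=> //.
  by rewrite (walkOf_mem wW).
Qed.

Lemma UU e j w1 w2 : w1 \in W -> w2 \in W -> VU'ij e j \in w1 -> VU'ij e j \in w2 -> w1 = w2.
Proof.
pose J := [set j0 | e \in S j0].
pose thr j0 := nth VZ (walkOf (VUij e j0)) 2.
have inj : {in J &, injective thr}.
  apply/imset_injP; rewrite eqn_leq leq_imset_card /=.
  have sub : [set VU'ij e j0 | j0 in J] \subset [set thr j0 | j0 in J].
    apply/subsetP => y /imsetP [j1 hj1 ->].
    have [w wW hw] : exists2 w, w \in W & VU'ij e j1 \in w.
      by apply: cov; move: hj1; rewrite inE.
    case: (ushape wW hw) => j2 [he ew hth].
    apply/imsetP; exists j2; first by rewrite inE.
    by rewrite /thr -ew hth.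
  apply: leq_trans (subset_leq_card sub).
  by rewrite card_imset // => a b [].
move=> w1W w2W h1 h2.
case: (ushape w1W h1) => j1 [he1 ew1 th1].
case: (ushape w2W h2) => j2 [he2 ew2 th2].
have ej : j1 = j2 by apply: inj; rewrite ?inE // /thr -ew1 -ew2 th1 th2.
by rewrite ew1 ew2 ej.
Qed.

Lemma incol_skip j (v a : V) s : incol j v -> v \in a :: s -> ~~ incol j a -> v \in s.
Proof. by move=> hv + ha; rewrite inE => /predU1P [ea|//]; move: ha; rewrite -ea hv. Qed.

Lemma col_mem_eq j l (v : V) x r : incol j v -> v \in VVij x l :: r -> path arc (VVij x l) r -> j = l.
Proof.
move=> hv hin hp; move: (colpath (eqxx l : incol l (VVij x l)) hp) => /andP [hall _].
have hl : incol l v.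
  by move: hin; rewrite inE => /predU1P [->|hr]; [exact: eqxx | exact: (allP hall)].
by case: v hv hl {hin} => //= a j1 /eqP <- /eqP.
Qed.

Lemma colcase v j w : w \in W -> incol j v -> v \in w ->
  (exists t, j = c t) \/
  exists e j0 r, w = [:: VUij e j0, VU e, VU'ij e j, VVij e j & r] /\ path arc (VVij e j) r.
Proof.
move=> wW hv; case: (memW wW) => hs _ _; move: wW.
case: w / hs => [t|t|t x l r hp|i j0|i j0|i j0 j'|i j0 j' r hp] wW hin;
  do ?[move: (incol_skip hv hin isT) => {}hin]; rewrite ?in_nil // in hin.
- left; exists t; rewrite (col_mem_eq hv hin hp); exact: (zcol wW erefl).
- right; exists i, j0, r; rewrite -(col_mem_eq hv hin hp); split=> //.
  by rewrite (col_mem_eq hv hin hp).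
Qed.

Lemma head_le (c0 : V) p z : path (fun u v => key u < key v) c0 p -> z \in c0 :: p -> key c0 <= key z.
Proof.
move=> hp; rewrite inE => /predU1P [->//|hz].
have tr : transitive (fun u v : V => key u < key v) by move=> ? ? ? /ltn_trans h /h.
by move: (allP (order_path_min tr hp) z hz) => /ltnW.
Qed.

Lemma pigeon (T : finType) (A : {set T}) (R : T -> T -> bool) :
  (forall x, x \in A -> exists2 e, e \in A & R x e) ->
  (forall x y e, x \in A -> y \in A -> R x e -> R y e -> x = y) ->
  forall e, e \in A -> exists2 x, x \in A & R x e.
Proof.
move=> htot hinj e eA.
pose f x := odflt x [pick e0 in A | R x e0].
have fA x : x \in A -> (f x \in A) && R x (f x).
  move=> xA; rewrite /f; case: pickP => [e0 /andP [h1 h2] | h0] /=; first by rewrite h1 h2.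
  by case: (htot x xA) => e0 h1 h2; move: (h0 e0); rewrite h1 h2.
have finj : {in A &, injective f}.
  move=> x y xA yA fxy; apply: (hinj x y (f x) xA yA); first by case/andP: (fA x xA).
  by rewrite fxy; case/andP: (fA y yA).
have fAA : f @: A = A.
  apply/eqP; rewrite eqEcard card_in_imset // leqnn andbT.
  by apply/subsetP => z /imsetP [x xA ->]; case/andP: (fA x xA).
move: eA; rewrite -{1}fAA => /imsetP [x xA ->]; exists x => //.
by case/andP: (fA x xA).
Qed.

Lemma lastv w y e j0 j r : w \in W -> VV'ij y j \in w ->
  w = [:: VUij e j0, VU e, VU'ij e j, VVij e j & r] -> path arc (VVij e j) r ->
  last (VVij e j) r = VV'ij y j.
Proof.
move=> wW hin ew hr; apply: (colpath_last (eqxx j : incol j (VVij e j)) hr).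
by move: hin; rewrite ew !inE.
Qed.

Lemma colshape w v j : (forall t, c t != j) -> w \in W -> incol j v -> v \in w ->
  exists e j0 r, [/\ w = [:: VUij e j0, VU e, VU'ij e j, VVij e j & r], path arc (VVij e j) r,
    e \in S j & v \in VVij e j :: r].
Proof.
move=> hj wW hv hin.
case: (colcase wW hv hin) => [[t ejt]|[e [j0 [r [ew hr]]]]].
  by move: (hj t); rewrite ejt eqxx.
exists e, j0, r; split=> //.
  case: (memW wW) => _ hall _; move: hall; rewrite ew /= => /and4P [_ _ h _]; exact: h.
move: hin; rewrite ew.
by move=> /(incol_skip hv)/(_ isT) /(incol_skip hv)/(_ isT) /(incol_skip hv)/(_ isT).
Qed.

Lemma ML j : (forall t, c t != j) -> forall w x b, w \in W ->
  (x, VVij b j) \in walk_arcs w -> x = VU'ij b j.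
Proof.
move=> hj w x b wW hx.
case: (memW wW) => _ hv [h [p [ew0 hp]]].
have ax : arc x (VVij b j) by apply: (walk_arcs_path hp); rewrite -ew0.
clear ew0 hp h p.
have [xin bin] := walk_arcs_mem hx.
case: (colshape hj wW (eqxx j : incol j (VVij b j)) bin) => e [j0 [r [ew hr eS bin']]].
have H := arc_inv ax; inversion H; subst => //.
- move: xin; rewrite !inE /=.
  move: (colpath (eqxx j : incol j (VVij e j)) hr) => /andP [hcol _].
  by rewrite (negbTE (@notin_col _ _ _ _ VZ _ hcol isT)).
-
  rename H2 into hab.
  pose A := [set y : 'I_n | (y \in S j) && (y <= a)].
  pose R y e0 := [exists h : V, (VV'ij y j \in walkOf h) && (VU'ij e0 j \in walkOf h)].
  have ain : VVij a j \in VVij e j :: r by move: xin; rewrite !inE.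
  have keyP := (colpath (eqxx j : incol j (VVij e j)) hr); case/andP: keyP => _ keyP.
  have eA : e \in A.
    by rewrite inE eS /=; move: (head_le keyP ain) => /= /ar2.
  have htot : forall y, y \in A -> exists2 e0, e0 \in A & R y e0.
    move=> y; rewrite inE => /andP [yS ya].
    have [w' w'W hw'] : exists2 w', w' \in W & VV'ij y j \in w' by apply: cov.
    case: (colshape hj w'W (eqxx j : incol j (VV'ij y j)) hw') => e' [j1 [r' [ew' hr' eS' yin]]].
    exists e'.
      rewrite inE eS' /=; apply: leq_trans ya.
      move: (colpath (eqxx j : incol j (VVij e' j)) hr') => /andP [_ kp].
      by move: (head_le kp yin) => /= /ar1.
    case: (walkOf_head w'W) => h' eh; apply/existsP; exists h'; rewrite eh hw' ew' /=.
    by rewrite !inE eqxx !orbT.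
  have hinj : forall y1 y2 e0, y1 \in A -> y2 \in A -> R y1 e0 -> R y2 e0 -> y1 = y2.
    move=> y1 y2 e0 _ _ /existsP [h1 /andP [a1 b1]] /existsP [h2 /andP [a2 b2]].
    have eqw := UU (walkOf_in a1) (walkOf_in a2) b1 b2.
    rewrite -eqw in a2.
    case: (colshape hj (walkOf_in a1) (eqxx j : incol j (VV'ij y1 j)) a1) => e1 [j2 [r1 [ew1 hr1 _ _]]].
    move: (lastv (walkOf_in a1) a1 ew1 hr1) (lastv (walkOf_in a1) a2 ew1 hr1) => -> [].
    by move=> ->.
  case: (pigeon htot hinj eA) => y yA /existsP [h1 /andP [a1 b1]].
  have u'in : VU'ij e j \in [:: VUij e j0, VU e, VU'ij e j, VVij e j & r] by rewrite !inE eqxx !orbT.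
  have eqw := UU (walkOf_in a1) wW b1 u'in.
  rewrite eqw in a1.
  move: (path_key_last keyP bin'); rewrite (lastv wW a1 erefl hr) /=.
  move: yA; rewrite inE => /andP [_ ya] hle.
  move/ar1: hle => /leq_trans /(_ ya) hba.
  by move: (leq_trans hab hba); rewrite ltnn.
Qed.

Lemma coverP i : [exists t, i \in S (c t)].
Proof.
case: (boolP [exists t, i \in S (c t)]) => // /negP hn.
have hj : forall j, i \in S j -> forall t, c t != j.
  move=> j hij t; apply/eqP => ejt; apply: hn; apply/existsP; exists t; by rewrite ejt.
pose X (v : V) := match v with VU i' | VUij i' _ | VU'ij i' _ | VVij i' _ | VV'ij i' _ => i' == i
                   | _ => false end.
have key : forall w a b, w \in W -> (a, b) \in walk_arcs w -> (X a -> X b) /\ (X b -> X a).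
  move=> w a b wW hab.
  case: (memW wW) => _ hall [h [p [ew hp]]].
  have harc : arc a b by apply: (walk_arcs_path hp); rewrite -ew.
  have [ain bin] := walk_arcs_mem hab.
  have va := allP hall a ain; have vb := allP hall b bin.
  have H := arc_inv harc; clear harc ain bin hp ew.
  move: hab va vb; case: a b / H => //=.
  - move=> b' j hab _ hb; split=> // /eqP eb; subst b'.
    by move: (ML (hj j hb) wW hab).
  - move=> a' b' j _ hab ha hb; split=> /eqP e; subst.
      by move: (ML (hj j ha) wW hab).
    by move: (ML (hj j hb) wW hab).
have hcl : forall a b, X a -> H_adj W a b -> X b.
  move=> a b Xa /orP [] /hasP [w wW hab]; first by case: (key w a b wW hab) => + _; apply.
  by case: (key w b a wW hab) => _; apply.
case: hW => _ _ _ hconn.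
case: (hconn (VU i) VZ isT isT erefl erefl) => p [hp hl].
by move: (path_closed hcl (eqxx i : X (VU i)) hp); rewrite hl.
Qed.
End W.

Lemma path_of_arcs (T : eqType) (r : rel T) h p :
  (forall x y, (x, y) \in walk_arcs (h :: p) -> r x y) -> path r h p.
Proof.
elim: p h => [|a p IH] h //= hr; rewrite (hr h a) ?inE ?eqxx //=.
by apply: IH => x y hxy; apply: hr; rewrite /walk_arcs /= inE hxy orbT.
Qed.

Lemma conn_walk (T : finType) (e : rel T) h p :
  (forall x y, (x, y) \in walk_arcs (h :: p) -> e x y) -> forall y, y \in h :: p -> connect e h y.
Proof.
elim: p h => [|a p IH] h hr y; first by rewrite inE => /eqP ->.
rewrite inE => /predU1P [->|hy] //.
have h1 : connect e h a by apply: connect1; apply: hr; rewrite /walk_arcs /= inE eqxx.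
have h2 : connect e a y.
  by apply: IH => // x z hxz; apply: hr; rewrite /walk_arcs /= inE hxz orbT.
exact: connect_trans h1 h2.
Qed.

Section Build.
Variables (n m k : nat) (S : 'I_m -> {set 'I_n}) (c : 'I_k -> 'I_m).
Hypothesis hc : forall i, exists t, i \in S (c t).
Variable t0 : 'I_k.
Local Notation V := (vtx n m k).
Local Notation arc := (DSC_arc S).
Local Notation vert := (DSC_vert S).

Definition Ps : seq ('I_n * 'I_m) := [seq p <- enum {: 'I_n * 'I_m} | p.1 \in S p.2].
Definition Zw (t : 'I_k) : seq V := VZl t :: Ph S (c t).
Definition W' : seq (seq V) := [seq Pv p.1 p.2 | p <- Ps] ++ [seq Zw t | t <- enum 'I_k].

Lemma Pv_in i j : i \in S j -> Pv i j \in W'.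
Proof.
move=> hij; rewrite mem_cat; apply/orP; left.
by apply/mapP; exists (i, j) => //; rewrite mem_filter hij mem_enum.
Qed.

Lemma Zw_in t : Zw t \in W'.
Proof. by rewrite mem_cat; apply/orP; right; apply: map_f; rewrite mem_enum. Qed.

Lemma W'P w : w \in W' -> (exists i j, i \in S j /\ w = Pv i j) \/ (exists t, w = Zw t).
Proof.
rewrite mem_cat => /orP [/mapP [[i j] /= + ->]|/mapP [t _ ->]].
  by rewrite mem_filter => /andP [hij _]; left; exists i, j.
by right; exists t.
Qed.

Lemma Ph_vert l : all vert (Ph S l : seq V).
Proof.
by rewrite /Ph /= all_map; apply/allP => x; rewrite /= mem_sort mem_enum.
Qed.

Lemma Ph_path l : path arc VZ (behead (Ph S l : seq V)).
Proof.
apply: path_of_arcs => x y hxy; apply/or3P; apply: Or32; apply/existsP; exists l; exact: hxy.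
Qed.

Lemma W'_walks : all (is_walk vert arc) W'.
Proof.
apply/allP => w wW.
case: (W'P wW) => [[i [j [hij ew]]]|[t ew]]; rewrite ew /is_walk.
  rewrite /Pv; apply/andP; split; first by rewrite /= hij.
  apply: path_of_arcs => x y hxy; apply/or3P; apply: Or31.
  by apply/existsP; exists i; apply/existsP; exists j; rewrite hij.
have h1 := Ph_vert (c t); have h2 := Ph_path (c t).
move: h1 h2; rewrite /Zw /Ph /= => -> ->; rewrite andbT.
by apply/or3P; apply: Or33; apply/existsP; exists t; rewrite !eqxx.
Qed.

Lemma W'_count v : vert v -> count (fun w => ohead w == Some v) W' = DSC_B v.
Proof.
rewrite count_cat !count_map.
case: v => [i|i j|i j|i j|i j||t] /= hv;
  rewrite ?(@eq_count _ _ pred0 [seq p <- enum {: 'I_n * 'I_m} | p.1 \in S p.2]) ?count_pred0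
          ?(@eq_count _ _ pred0 (enum 'I_k)) ?count_pred0 //.
- rewrite (@eq_count _ _ (pred1 (i, j))); last first.
    by move=> [a b] /=; apply/eqP/eqP => [[-> ->]|[-> ->]].
  rewrite count_uniq_mem; last by rewrite filter_uniq ?enum_uniq.
  by rewrite /Ps mem_filter hv mem_enum.
- rewrite (@eq_count _ _ (pred1 t)); last first.
    by move=> a /=; apply/eqP/eqP => [[->]|->].
  rewrite count_uniq_mem; last by rewrite -enumT; exact: enum_uniq.
  have := mem_enum 'I_k t; rewrite enumT inE /= => ->; by [].
Qed.

Lemma VV_in_Zw i t : i \in S (c t) -> VVij i (c t) \in Zw t.
Proof.
move=> h; rewrite /Zw /Ph inE in_cons; apply/orP; right; apply/orP; right.
by apply: map_f; rewrite mem_sort mem_enum.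
Qed.

Lemma W'_cover x : vert x -> H_vert W' x.
Proof.
move=> vx; apply/hasP; case: x vx => [i|i j|i j|i j|i j||t] /= hv.
- case: (hc i) => t ht; exists (Pv i (c t)); first exact: Pv_in.
  by rewrite /Pv !inE ?eqxx ?orbT.
all: try by exists (Pv i j); [exact: Pv_in | rewrite /Pv !inE ?eqxx ?orbT].
- by exists (Zw t0); [exact: Zw_in | rewrite /Zw /Ph !inE ?eqxx ?orbT].
- by exists (Zw t); [exact: Zw_in | rewrite /Zw !inE ?eqxx].
Qed.

Lemma allconn w a b : w \in W' -> a \in w -> b \in w -> connect (H_adj W') a b.
Proof.
move=> wW; have hsym : connect_sym (H_adj W') by apply: sym_connect_sym => x y; rewrite /H_adj orbC.
case: w wW => [|h p] // wW ha hb.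
have hr : forall x y, (x, y) \in walk_arcs (h :: p) -> H_adj W' x y.
  by move=> x y hxy; rewrite /H_adj; apply/orP; left; apply/hasP; exists (h :: p).
apply: (connect_trans (y:=h)); first by rewrite hsym; exact: conn_walk hr _ ha.
exact: conn_walk hr _ hb.
Qed.

Lemma conn_VZ x : vert x -> connect (H_adj W') x VZ.
Proof.
move=> /W'_cover /hasP [w wW xw].
case: (W'P wW) => [[i [j [hij ew]]]|[t ew]]; subst w; last first.
  by apply: (allconn wW xw); rewrite /Zw /Ph !inE ?eqxx ?orbT.
case: (hc i) => t ht.
apply: (connect_trans (y := VU i)); first by apply: (allconn wW xw); rewrite /Pv !inE ?eqxx ?orbT.
apply: (connect_trans (y := VVij i (c t))).
  by apply: (allconn (Pv_in ht)); rewrite /Pv !inE ?eqxx ?orbT.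
apply: (allconn (Zw_in t)); first exact: VV_in_Zw.
by rewrite /Zw /Ph !inE ?eqxx ?orbT.
Qed.

Lemma W'_conn x y : vert x -> vert y -> H_connected W' x y.
Proof.
move=> vx vy.
have hsym : connect_sym (H_adj W') by apply: sym_connect_sym => a b; rewrite /H_adj orbC.
have : connect (H_adj W') x y.
  apply: connect_trans (conn_VZ vx) _; rewrite hsym; exact: conn_VZ.
by case/connectP => p hp hl; exists p.
Qed.

Lemma W'_sol : ST_solution vert arc DSC_F DSC_B W'.
Proof.
split; [exact: W'_walks | exact: W'_count | by move=> x vx _; exact: W'_cover |].
by move=> x y vx vy _ _; exact: W'_conn.
Qed.
End Build.

Theorem lemma7 (n m k : nat) (S : 'I_m -> {set 'I_n})
    (hcover : \bigcup_(t < m) S t = [set: 'I_n])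
    (hk1 : (1 <= k)%N) (hkm : (k <= m)%N) :
  ST_positive (DSC_vert S) (DSC_arc S) (@DSC_F n m k) (@DSC_B n m k) ->
  exists W : seq (seq (vtx n m k)),
    [/\ ST_solution (DSC_vert S) (DSC_arc S) (@DSC_F n m k) (@DSC_B n m k) W,
        (forall (i : 'I_n) (j : 'I_m), i \in S j -> Pv i j \in W) &
        (forall t : 'I_k, exists l : 'I_m, VZl t :: Ph S l \in W)].
Proof.
case=> W hW.
pose m0 : 'I_m := Ordinal (leq_trans hk1 hkm).
pose cc := c W m0.
have hc : forall i, exists t, i \in S (cc t).
  by move=> i; case/existsP: (coverP hW m0 i) => t ht; exists t.
exists (W' S cc); split.
- exact: (W'_sol hc (Ordinal hk1)).
- by move=> i j hij; exact: Pv_in.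
- by move=> t; exists (cc t); exact: Zw_in.
Qed.
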